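(* Let $n\ge 3$ and let $t:\{2,\dots,n-1\}\to[0,\infty)$ be arbitrary (the time to evaluate all coalitions of each size). For $S\subseteq\{2,\dots,n-1\}$ put $T(S)=\sum_{s\in S}t(s)$. Call a pair $(S_1,S_2)$ of subsets of $\{2,\dots,n-1\}$ covering if every integer partition of $n$ is reachable from $[n]$ in $G_{S_1\cup\{n\}}$ or in $G_{S_2\cup\{n\}}$. Then $$\min_{(S_1,S_2)\ \text{covering}}\ \max\big(T(S_1),T(S_2)\big)\;\le\;T\big(\{2,3,\dots,\lfloor 2n/3\rfloor\}\big),$$ i.e., the run time of CDP with the pair of size sets chosen by the SSD procedure (a covering pair minimizing $\max(T(S_1),T(S_2))$) is at most the run time of IDP, which evaluates the sizes $\{2,3,\dots,\lfloor 2n/3\rfloor,n\}$.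
   Context: Restricted integer partition graph: for a set $S\subseteq\{2,\dots,n\}$, $G_S$ is the directed graph whose nodes are the integer partitions of $n$ (multisets of positive integers summing to $n$), with an edge from $P$ to $P'$ whenever $P'$ is obtained from $P$ by replacing a single part $x$ of $P$ with $x\in S$ by two positive parts $x_1,x_2$ with $x_1+x_2=x$. The node $[n]$ is the partition with one part. The run time of a pair of size sets is the maximum of the run times of its two sets (they are processed in parallel), and the run time of a size set is the sum of the per-size evaluation times; size $n$ is always evaluated and size $1$ never, so they are excluded from $T$. *)

(* Defs.v *)
From HB Require Import structures.
From mathcomp Require Import all_boot all_order all_algebra.
From Stdlib Require Import Relations.Relation_Operators.
Set Implicit Arguments. Unset Strict Implicit. Unset Printing Implicit Defensive.
Import Order.TTheory GRing.Theory Num.Theory.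

(* An integer partition of n, represented as a sequence of positive parts
   summing to n; partitions are multisets, so sequences are compared up to
   permutation (perm_eq). *)
Definition is_partition (n : nat) (P : seq nat) : bool :=
  all (fun x => 0 < x) P && (sumn P == n).

(* Edge of G_A (A = set of splittable part sizes): replace one part x with
   x \in A by two positive parts x1, x2 with x1 + x2 = x. *)
Definition split_step (A : pred nat) (P Q : seq nat) : Prop :=
  exists x x1 x2 : nat,
    [/\ x \in P, A x, (0 < x1) && (0 < x2), x1 + x2 = x
      & perm_eq Q (x1 :: x2 :: rem x P)].

Definition reachable (A : pred nat) (n : nat) (Q : seq nat) : Prop :=
  exists Q', perm_eq Q Q' /\ clos_refl_trans _ (split_step A) [:: n] Q'.

Definition with_n (n : nat) (S : {set 'I_n}) : pred nat :=
  fun x => (x == n) || [exists i in S, val i == x].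

Definition sizes_ok (n : nat) (S : {set 'I_n}) : bool :=
  [forall i in S, 2 <= val i].

Definition covering (n : nat) (S1 S2 : {set 'I_n}) : Prop :=
  forall P, is_partition n P ->
    reachable (with_n S1) n P \/ reachable (with_n S2) n P.

Definition runtime (R : realFieldType) (n : nat) (t : nat -> R)
  (S : {set 'I_n}) : R := (\sum_(i in S) t (val i))%R.

(* Main.v *)
Require Import Defs.
From HB Require Import structures.
From mathcomp Require Import all_boot all_order all_algebra.
From Stdlib Require Import Relations.Relation_Operators Relations.Operators_Properties.
From mathcomp Require Import zify.
Import Order.TTheory GRing.Theory Num.Theory.
Set Implicit Arguments. Unset Strict Implicit.

Section R.
Variable A : pred nat.
Notation rt := (clos_refl_trans _ (split_step A)).

Lemma rem_cat_l (x : nat) (P c : seq nat) : x \in P -> rem x (P ++ c) = rem x P ++ c.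
Proof.
elim: P => //= y P IH; rewrite in_cons => H.
case: (eqVneq y x) => [//|ne].
rewrite IH //; move: H; rewrite eq_sym (negbTE ne) //.
Qed.

Lemma perm_rem' (x : nat) P P' : x \in P -> perm_eq P P' -> perm_eq (rem x P) (rem x P').
Proof.
move=> xP pP; have xP' : x \in P' by rewrite -(perm_mem pP).
rewrite -(perm_cons x); apply: perm_trans (perm_to_rem xP'); rewrite perm_sym.
by apply: perm_trans (perm_to_rem xP); rewrite perm_sym.
Qed.

Lemma step_perm P P' Q Q' : split_step A P Q -> perm_eq P P' -> perm_eq Q Q' ->
  split_step A P' Q'.
Proof.
move=> [x [x1 [x2 [xP Ax pos sx pQ]]]] pP pQ'.
exists x, x1, x2; split => //; first by rewrite -(perm_mem pP).
apply: perm_trans (_ : perm_eq Q _); first by rewrite perm_sym.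
apply: (perm_trans pQ).
by rewrite perm_cons perm_cons perm_rem'.
Qed.

Lemma step_cat P Q c : split_step A P Q -> split_step A (P ++ c) (Q ++ c).
Proof.
move=> [x [x1 [x2 [xP Ax pos sx pQ]]]].
exists x, x1, x2; split => //; first by rewrite mem_cat xP.
by rewrite rem_cat_l // -!cat_cons perm_cat2r.
Qed.

Lemma rt_perm_src P P' Q : rt P Q -> perm_eq P P' -> exists Q', perm_eq Q Q' /\ rt P' Q'.
Proof.
move=> H0 pP; have H := clos_rt_rt1n _ _ _ _ H0; case: H => [|y z st rtz].
  by exists P'; split => //; apply: rt_refl.
exists z; split => //; apply: rt_trans (rt_step _ _ _ _ (step_perm st pP (perm_refl y))) _.
exact: clos_rt1n_rt.
Qed.

Definition Reach P Q := exists Q', perm_eq Q Q' /\ rt P Q'.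

Lemma reach_refl P : Reach P P.
Proof. by exists P; split => //; apply: rt_refl. Qed.

Lemma reach_step P Q : split_step A P Q -> Reach P Q.
Proof. by move=> s; exists Q; split => //; apply: rt_step. Qed.

Lemma reach_trans P Q S : Reach P Q -> Reach Q S -> Reach P S.
Proof.
move=> [Q' [pQ r1]] [S' [pS r2]].
have [S'' [pS' r3]] := rt_perm_src r2 pQ.
exists S''; split; first exact: perm_trans pS pS'.
exact: rt_trans r1 r3.
Qed.

Lemma reach_perm_l P P' Q : perm_eq P P' -> Reach P Q -> Reach P' Q.
Proof.
move=> pP [Q' [pQ r]]; have [Q'' [p2 r2]] := rt_perm_src r pP.
by exists Q''; split => //; apply: perm_trans pQ p2.
Qed.

Lemma reach_perm_r P Q Q' : perm_eq Q Q' -> Reach P Q -> Reach P Q'.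
Proof.
move=> pQ [Q'' [p r]]; exists Q''; split => //.
by apply: perm_trans p; rewrite perm_sym.
Qed.

Lemma rt_cat P Q c : rt P Q -> rt (P ++ c) (Q ++ c).
Proof.
elim => [x y s|x|x y z _ IH1 _ IH2].
- by apply: rt_step; apply: step_cat.
- exact: rt_refl.
- exact: rt_trans IH1 IH2.
Qed.

Lemma reach_cat P Q c : Reach P Q -> Reach (P ++ c) (Q ++ c).
Proof.
move=> [Q' [p r]]; exists (Q' ++ c); split; first by rewrite perm_cat2r.
exact: rt_cat.
Qed.

Lemma sumn_pos P : all (fun x => 0 < x) P -> P != [::] -> 0 < sumn P.
Proof. by case: P => //= p P /andP[p0 _] _; rewrite addn_gt0 p0. Qed.

Lemma L1 P m : all (fun x => 0 < x) P -> sumn P = m -> P != [::] ->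
  (forall x, 2 <= x <= m -> A x) -> Reach [:: m] P.
Proof.
elim: P m => [|p P IH] m //= /andP[p0 aP] sm _ Am.
have [eP|nP] := eqVneq P [::].
  by move: sm; rewrite eP /= addn0 => <-; apply: reach_refl.
have sP := sumn_pos aP nP.
apply: (@reach_trans _ ([:: sumn P] ++ [:: p])).
  apply: reach_step; exists m, (sumn P), p; split => //.
  - by rewrite inE.
  - apply: Am; lia.
  - by rewrite sP p0.
  - lia.
  - by rewrite /= eqxx.
apply: (@reach_perm_r _ (P ++ [:: p])); first by rewrite perm_catC.
apply: reach_cat; apply: IH => // x hx; apply: Am; lia.
Qed.
End R.

Lemma split_ex n P Pre : 0 < n -> sumn Pre + sumn P = n -> 3 * sumn Pre < n ->
  1 < size (Pre ++ P) ->
  exists B C, [/\ perm_eq (Pre ++ P) (B ++ C), C != [::], B != [::],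
     (size B == 1) || (3 * sumn B <= 2 * n) & (size C == 1) || (3 * sumn C <= 2 * n)].
Proof.
elim: P Pre => [|e rest IH] Pre n0 /= sP lt sz; first by lia.
have [h1|h1] := ltnP (3 * (sumn Pre + e)) n.
  have [B [C [p1 p2 p3 p4 p5]]] := IH (e :: Pre) n0 ltac:(rewrite /=; lia) ltac:(rewrite /=; lia)
     ltac:(move: sz; rewrite /= !size_cat /=; lia).
  exists B, C; split => //; apply: perm_trans p1.
  by rewrite -cat1s perm_catCA.
have [h2|h2] := leqP (3 * (sumn Pre + e)) (2 * n).
  exists (e :: Pre), rest; split => //.
  - by rewrite -cat1s perm_catCA.
  - by clear IH sz; case: rest sP => //= sP; lia.
  - by rewrite /=; apply/orP; right; lia.
  - by apply/orP; right; lia.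
exists [:: e], (Pre ++ rest); split => //.
- by rewrite -cat1s perm_catCA.
- by clear IH; move: sz; rewrite size_cat /=; case: Pre {lt sP h1 h2} => //; case: rest.
- by apply/orP; right; rewrite sumn_cat; lia.
Qed.

Lemma goodR (A : pred nat) n X : 0 < n -> all (fun x => 0 < x) X -> X != [::] ->
  (forall x, 2 <= x -> 3 * x <= 2 * n -> A x) ->
  (size X == 1) || (3 * sumn X <= 2 * n) -> Reach A [:: sumn X] X.
Proof.
move=> n0 aX nX hA /orP[|h].
  by case: X {aX nX} => [|x [|]] //= _; rewrite addn0; apply: reach_refl.
apply: L1 => // x hx; apply: hA; lia.
Qed.

Theorem lemma1 (R : realFieldType) (n : nat) (t : nat -> R) :
  3 <= n ->
  (forall s, 2 <= s <= n.-1 -> (0 <= t s)%R) ->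
  exists S1 S2 : {set 'I_n},
    [/\ sizes_ok S1, sizes_ok S2, covering S1 S2
      & (Num.max (runtime t S1) (runtime t S2)
           <= \sum_(2 <= s < ((2 * n) %/ 3).+1) t s)%R].
Proof.
move=> n3 _.
pose S := [set i : 'I_n | 2 <= val i <= (2 * n) %/ 3].
have okS : sizes_ok S by apply/forallP => i; apply/implyP; rewrite inE => /andP[].
have hA : forall x, 2 <= x -> 3 * x <= 2 * n -> with_n S x.
  move=> x x2 x3; have xn : x < n by lia.
  apply/orP; right; apply/existsP; exists (Ordinal xn); rewrite inE /= eqxx andbT.
  apply/andP; split => //; rewrite leq_divRL //; lia.
exists S, S; split => //.
  move=> P /andP[aP /eqP sP]; left; change (Reach (with_n S) [:: n] P).
  have n0 : 0 < n by lia.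
  have [sz|sz] := leqP (size P) 1.
    case: P aP sP sz => [|p [|]] //= _; first by lia.
    by rewrite addn0 => -> _; apply: reach_refl.
  have [B [C [pBC nC nB gB gC]]] := @split_ex n P [::] n0 ltac:(by rewrite /= sP) ltac:(by []) sz.
  have aBC : all (fun x => 0 < x) (B ++ C) by rewrite -(perm_all _ pBC).
  move: aBC; rewrite all_cat => /andP[aB aC].
  have sBC : sumn B + sumn C = n by rewrite -sumn_cat -(perm_sumn pBC).
  apply: (@reach_perm_r _ _ (B ++ C)); first by rewrite perm_sym.
  apply: (@reach_trans _ _ [:: sumn B; sumn C]).
    apply: reach_step; exists n, (sumn B), (sumn C); split => //.
    - by rewrite inE.
    - by rewrite /with_n /= eqxx.
    - by rewrite !sumn_pos.
    - by rewrite /= eqxx.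
  apply: (@reach_trans _ _ (B ++ [:: sumn C])).
    apply: (@reach_cat _ [:: sumn B] B [:: sumn C]); exact: (goodR (n:=n)).
  apply: (@reach_perm_l _ ([:: sumn C] ++ B) (B ++ [:: sumn C]) (B ++ C)); first by rewrite perm_catC.
  apply: (@reach_perm_r _ _ (C ++ B)); first by rewrite perm_catC.
  by apply: (@reach_cat _ [:: sumn C] C B); exact: (goodR (n:=n)).
rewrite maxxx /runtime.
have k_lt : (2 * n) %/ 3 < n by rewrite ltn_divLR //; lia.
rewrite (big_nat_widen _ _ n) ?ltnS ?(ltnW k_lt) //.
rewrite (big_nat_widenl _ 0) // big_mkord.
rewrite le_eqVlt; apply/orP; left; apply/eqP; apply: eq_bigl => i.
by rewrite inE ltnS /= andbC.
Qed.
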